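(* Let $R\subseteq\mathbb Q$ be an infinite set such that there exist computable functions $\tau_1,\tau_2\colon\mathbb N\to\mathbb Z$ with $\tau_2(k)\neq0$ for all $k\in\mathbb N$ and $\{\tau_1(k)/\tau_2(k):k\in\mathbb N\}=R$. If the set of all Diophantine equations which have at most finitely many solutions in $R$ is recursively enumerable, then there exists an algorithm which decides, for any given Diophantine equation, whether or not it has a solution in $R$.
   Context: $\mathbb N=\{0,1,2,\ldots\}$. A Diophantine equation is an equation $D(x_1,\ldots,x_n)=0$ with $D\in\mathbb Z[x_1,\ldots,x_n]$ for some $n\ge1$; such equations are coded as natural numbers so that recursiveness and recursive enumerability of sets of them make sense. A solution in $R$ means a tuple in $R^n$. *)

(* Defs.v *)
(* Computability is modelled by (loosely-typed) mu-recursive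
   functions on lists of naturals, with a relational big-step semantics. *)
From HB Require Import structures.
From mathcomp Require Import all_boot all_order all_algebra.
Set Implicit Arguments. Unset Strict Implicit. Unset Printing Implicit Defensive.
Import Order.TTheory GRing.Theory Num.Theory.

Inductive recf : Type :=
| RZero : recf
| RSucc : recf
| RProj : nat -> recf                (* i-th argument (0 if absent) *)
| RComp : recf -> seq recf -> recf
| RPrim : recf -> recf -> recf
| RMu   : recf -> recf.

Inductive eval : recf -> seq nat -> nat -> Prop :=
| eZero v : eval RZero v 0
| eSucc v : eval RSucc v (head 0 v).+1
| eProj i v : eval (RProj i) v (nth 0 v i)
| eComp f gs v ws y : evals gs v ws -> eval f ws y -> eval (RComp f gs) v y
| ePrim0 f g v y : eval f v y -> eval (RPrim f g) (0 :: v) y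
| ePrimS f g n v r y : eval (RPrim f g) (n :: v) r -> eval g (n :: r :: v) y ->
    eval (RPrim f g) (n.+1 :: v) y
| eMu f v n : eval f (n :: v) 0 ->
    (forall m, m < n -> exists k, eval f (m :: v) k.+1) -> eval (RMu f) v n
with evals : seq recf -> seq nat -> seq nat -> Prop :=
| esNil v : evals [::] v [::]
| esCons g gs v w ws : eval g v w -> evals gs v ws -> evals (g :: gs) v (w :: ws).

Definition code_int (z : int) : nat :=
  match z with Posz n => n.*2 | Negz n => n.*2.+1 end.

Definition cpair (a b : nat) : nat := ((a + b) * (a + b).+1)./2 + b.

Definition computable_NZ (f : nat -> int) : Prop :=
  exists e : recf, forall k, eval e [:: k] (code_int (f k)).

Inductive zpoly : Type :=
| PVar : nat -> zpoly
| PConst : int -> zpoly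
| PAdd : zpoly -> zpoly -> zpoly
| PMul : zpoly -> zpoly -> zpoly.

Fixpoint code_zpoly (p : zpoly) : nat :=
  match p with
  | PVar i => 4 * i
  | PConst z => (4 * code_int z).+1
  | PAdd p q => (4 * cpair (code_zpoly p) (code_zpoly q)).+2
  | PMul p q => (4 * cpair (code_zpoly p) (code_zpoly q)).+3
  end.

(* value at a tuple (variables beyond the tuple read as 0) *)
Fixpoint zpeval (p : zpoly) (x : seq rat) : rat :=
  match p with
  | PVar i => nth 0%R x i
  | PConst z => z%:~R
  | PAdd p q => (zpeval p x + zpeval q x)%R
  | PMul p q => (zpeval p x * zpeval q x)%R
  end.

(* A Diophantine equation D(x_1,...,x_n) = 0 with n = (dioph_nv d).+1 >= 1. *)
Record dioph := Dioph { dioph_nv : nat; dioph_poly : zpoly }.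

Definition code_dioph (d : dioph) : nat :=
  cpair (dioph_nv d) (code_zpoly (dioph_poly d)).

Definition solution_in (R : rat -> Prop) (d : dioph) (s : seq rat) : Prop :=
  size s = (dioph_nv d).+1 /\ (forall q, q \in s -> R q) /\
  zpeval (dioph_poly d) s = 0%R.

Definition has_solution_in (R : rat -> Prop) (d : dioph) : Prop :=
  exists s, solution_in R d s.

Definition finitely_many_solutions_in (R : rat -> Prop) (d : dioph) : Prop :=
  exists L : seq (seq rat), forall s, solution_in R d s -> s \in L.

Definition re_dioph (P : dioph -> Prop) : Prop :=
  exists e : recf, forall c : nat,
    (exists y, eval e [:: c] y) <-> (exists d, c = code_dioph d /\ P d).

Definition decidable_dioph (P : dioph -> Prop) : Prop :=
  exists e : recf, forall d : dioph,
    (P d -> eval e [:: code_dioph d] 1) /\ (~ P d -> eval e [:: code_dioph d] 0).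

Definition infinite_set (R : rat -> Prop) : Prop :=
  ~ exists s : seq rat, forall q, R q -> q \in s.

(* Main.v *)
Require Import Defs.
From HB Require Import structures.
From mathcomp Require Import all_boot all_order all_algebra.
From mathcomp Require Import zify ring.
From Stdlib Require Import Classical.
Import Order.TTheory GRing.Theory Num.Theory.
Set Implicit Arguments. Unset Strict Implicit.

Definition rcomp (n : nat) (F : seq nat -> nat) :=
  exists f : recf, forall v, size v = n -> eval f v (F v).

Lemma comp_ext n F G : rcomp n F -> (forall v, size v = n -> F v = G v) -> rcomp n G.
Proof. by move=> [f Hf] E; exists f => v Hv; rewrite -E //; apply: Hf. Qed.

Ltac cext := let H := fresh in move=> H; refine (comp_ext H _).

Lemma comp_proj n i : rcomp n (fun v => nth 0 v i).
Proof. by exists (RProj i) => v _; constructor. Qed.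

Fixpoint constf c := if c is c'.+1 then RComp RSucc [:: constf c'] else RZero.

Lemma eval_constf c v : eval (constf c) v c.
Proof.
elim: c => [|c IH] /=; first by constructor.
apply: (@eComp _ _ _ [:: c]); first by constructor; [exact: IH|constructor].
exact: (eSucc [:: c]).
Qed.

Lemma comp_const n c : rcomp n (fun _ => c).
Proof. by exists (constf c) => v _; apply: eval_constf. Qed.

Fixpoint allcomp n (Gs : seq (seq nat -> nat)) : Prop :=
  if Gs is G :: Gs' then rcomp n G /\ allcomp n Gs' else True.

Lemma comp_compose m n F Gs : rcomp m F -> size Gs = m -> allcomp n Gs ->
  rcomp n (fun v => F (map (fun G => G v) Gs)).
Proof.
move=> [f Hf] Hs HG.
have [gs Hgs] : exists gs, forall v, size v = n -> evals gs v (map (fun G => G v) Gs).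
  elim: Gs {Hs} HG => [|G Gs IH] /= => [_|[[g Hg] /IH [gs Hgs]]].
    by exists [::] => v _; constructor.
  by exists (g :: gs) => v Hv; constructor; [apply: Hg|apply: Hgs].
exists (RComp f gs) => v Hv; econstructor; first exact: Hgs.
by apply: Hf; rewrite size_map.
Qed.

Fixpoint prec (F G : seq nat -> nat) (k : nat) (w : seq nat) : nat :=
  if k is k'.+1 then G (k' :: prec F G k' w :: w) else F w.

Lemma comp_prec n F G : rcomp n F -> rcomp n.+2 G ->
  rcomp n.+1 (fun v => prec F G (head 0 v) (behead v)).
Proof.
move=> [f Hf] [g Hg]; exists (RPrim f g) => [[|k w]] //= [Hw].
elim: k => [|k IH] /=; first by constructor; apply: Hf.
by econstructor; first exact: IH; apply: Hg => /=; rewrite Hw.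
Qed.

Lemma comp1 n F G : rcomp 1 F -> rcomp n G -> rcomp n (fun v => F [:: G v]).
Proof. move=> HF HG; exact: (@comp_compose _ _ _ [:: G] HF). Qed.

Lemma comp2 n F G1 G2 : rcomp 2 F -> rcomp n G1 -> rcomp n G2 ->
  rcomp n (fun v => F [:: G1 v; G2 v]).
Proof. move=> HF H1 H2; exact: (@comp_compose _ _ _ [:: G1; G2] HF). Qed.

Lemma comp3 n F G1 G2 G3 : rcomp 3 F -> rcomp n G1 -> rcomp n G2 -> rcomp n G3 ->
  rcomp n (fun v => F [:: G1 v; G2 v; G3 v]).
Proof. move=> HF H1 H2 H3; exact: (@comp_compose _ _ _ [:: G1; G2; G3] HF). Qed.

Definition projs n : seq (seq nat -> nat) := map (fun i v => nth 0 v i) (iota 0 n).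

Lemma allcomp_projs m n : allcomp m (projs n).
Proof.
rewrite /projs; have : forall j, allcomp m (map (fun i v => nth 0 v i) (iota j n)).
  by elim: n => [|n IH] j //=; split; [exact: comp_proj|exact: IH].
by apply.
Qed.

Lemma map_projs v : map (fun G => G v) (projs (size v)) = v.
Proof.
rewrite /projs -map_comp; exact: (mkseq_nth 0 v).
Qed.

Lemma comp_loop n I S C : rcomp n I -> rcomp n.+2 S -> rcomp n C ->
  rcomp n (fun v => prec I S (C v) v).
Proof.
move=> HI HS HC.
have HP := comp_prec HI HS.
have := @comp_compose _ _ _ (C :: projs n) HP.
rewrite /= size_map size_iota => /(_ n erefl (conj HC (allcomp_projs n n))) H.
refine (comp_ext H _) => v Hv /=; by rewrite -Hv map_projs.
Qed.

Lemma comp_succ n F : rcomp n F -> rcomp n (fun v => (F v).+1).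
Proof.
move=> HF; have H1 : rcomp 1 (fun v => (head 0 v).+1) by exists RSucc => v _; constructor.
exact: (comp1 H1 HF).
Qed.

Lemma comp_add_base : rcomp 2 (fun v => nth 0 v 0 + nth 0 v 1).
Proof.
have := comp_loop (n:=2) (I := fun v => nth 0 v 1) (S := fun v => (nth 0 v 1).+1)
  (C := fun v => nth 0 v 0) (comp_proj _ _) (comp_succ (comp_proj _ _)) (comp_proj _ _).
cext => v _; elim: (nth 0 v 0) => //= k ->; by rewrite addSn.
Qed.

Lemma comp_add n F G : rcomp n F -> rcomp n G -> rcomp n (fun v => F v + G v).
Proof. move=> HF HG; exact: (comp2 comp_add_base HF HG). Qed.

Lemma comp_mul_base : rcomp 2 (fun v => nth 0 v 0 * nth 0 v 1).
Proof.
have := comp_loop (n:=2) (I := fun v => 0) (S := fun v => nth 0 v 1 + nth 0 v 3)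
  (C := fun v => nth 0 v 0) (comp_const _ _) (comp_add (comp_proj _ _) (comp_proj _ _)) (comp_proj _ _).
cext => v _; elim: (nth 0 v 0) => //= k ->; by rewrite mulSn addnC.
Qed.

Lemma comp_mul n F G : rcomp n F -> rcomp n G -> rcomp n (fun v => F v * G v).
Proof. move=> HF HG; exact: (comp2 comp_mul_base HF HG). Qed.

Lemma comp_pred_base : rcomp 1 (fun v => (nth 0 v 0).-1).
Proof.
have := comp_loop (n:=1) (I := fun v => 0) (S := fun v => nth 0 v 0)
  (C := fun v => nth 0 v 0) (comp_const _ _) (comp_proj _ _) (comp_proj _ _).
by cext => v _; case: (nth 0 v 0).
Qed.

Lemma comp_pred n F : rcomp n F -> rcomp n (fun v => (F v).-1).
Proof. move=> HF; exact: (comp1 comp_pred_base HF). Qed.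

Lemma comp_sub_base : rcomp 2 (fun v => nth 0 v 0 - nth 0 v 1).
Proof.
have := comp_loop (n:=2) (I := fun v => nth 0 v 0) (S := fun v => (nth 0 v 1).-1)
  (C := fun v => nth 0 v 1) (comp_proj _ _) (comp_pred (comp_proj _ _)) (comp_proj _ _).
cext => v _; elim: (nth 0 v 1) => /= [|k ->]; first by rewrite subn0.
by rewrite subnS.
Qed.

Lemma comp_sub n F G : rcomp n F -> rcomp n G -> rcomp n (fun v => F v - G v).
Proof. move=> HF HG; exact: (comp2 comp_sub_base HF HG). Qed.

Lemma comp_iszero_base : rcomp 1 (fun v => nat_of_bool (nth 0 v 0 == 0)).
Proof.
have := comp_loop (n:=1) (I := fun v => 1) (S := fun v => 0)
  (C := fun v => nth 0 v 0) (comp_const _ _) (comp_const _ _) (comp_proj _ _).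
by cext => v _; case: (nth 0 v 0).
Qed.

Lemma comp_iszero n F : rcomp n F -> rcomp n (fun v => nat_of_bool (F v == 0)).
Proof. move=> HF; exact: (comp1 comp_iszero_base HF). Qed.

Lemma comp_eqb n F G : rcomp n F -> rcomp n G -> rcomp n (fun v => nat_of_bool (F v == G v)).
Proof.
move=> HF HG; have := comp_iszero (comp_add (comp_sub HF HG) (comp_sub HG HF)).
cext => v _; congr nat_of_bool; apply/eqP; case: eqP => E; lia.
Qed.

Lemma comp_leb n F G : rcomp n F -> rcomp n G -> rcomp n (fun v => nat_of_bool (F v <= G v)).
Proof.
move=> HF HG; have := comp_iszero (comp_sub HF HG).
by cext => v _; rewrite subn_eq0.
Qed.

Lemma comp_cond n B F G : rcomp n B -> rcomp n F -> rcomp n G ->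
  rcomp n (fun v => if B v == 0 then G v else F v).
Proof.
move=> HB HF HG.
have := comp_add (comp_mul (comp_iszero HB) HG) (comp_mul (comp_iszero (comp_iszero HB)) HF).
by cext => v _; case: (B v) => [|b] /=; rewrite ?mul1n ?mul0n ?addn0 ?add0n.
Qed.

Lemma comp_condb n (b : seq nat -> bool) F G : rcomp n (fun v => nat_of_bool (b v)) ->
  rcomp n F -> rcomp n G -> rcomp n (fun v => if b v then F v else G v).
Proof.
move=> HB HF HG; have := comp_cond HB HF HG.
by cext => v _; case: (b v).
Qed.

Lemma comp_odd_base : rcomp 1 (fun v => nat_of_bool (odd (nth 0 v 0))).
Proof.
have := comp_loop (n:=1) (I := fun v => 0) (S := fun v => nat_of_bool (nth 0 v 1 == 0))
  (C := fun v => nth 0 v 0) (comp_const _ _) (comp_iszero (comp_proj _ _)) (comp_proj _ _).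
cext => v _; elim: (nth 0 v 0) => //= k ->; by case: (odd k).
Qed.

Lemma comp_half_base : rcomp 1 (fun v => (nth 0 v 0)./2).
Proof.
have := comp_loop (n:=1) (I := fun v => 0) (S := fun v => nth 0 v 1 + nat_of_bool (odd (nth 0 v 0)))
  (C := fun v => nth 0 v 0) (comp_const _ _)
  (comp_add (comp_proj _ _) (comp1 comp_odd_base (comp_proj _ _))) (comp_proj _ _).
cext => v _; elim: (nth 0 v 0) => //= k ->.
by rewrite uphalf_half addnC.
Qed.

Lemma comp_half n F : rcomp n F -> rcomp n (fun v => (F v)./2).
Proof. move=> HF; exact: (comp1 comp_half_base HF). Qed.
Lemma comp_odd n F : rcomp n F -> rcomp n (fun v => nat_of_bool (odd (F v))).
Proof. move=> HF; exact: (comp1 comp_odd_base HF). Qed.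

Fixpoint tri s := if s is s'.+1 then tri s' + s else 0.

Lemma tri_double s : (tri s).*2 = s * s.+1.
Proof. elim: s => //= s IH; rewrite doubleD IH; lia. Qed.

Lemma tri_half s : (s * s.+1)./2 = tri s.
Proof. by rewrite -tri_double doubleK. Qed.

Lemma cpairE a b : cpair a b = tri (a + b) + b.
Proof. by rewrite /cpair tri_half. Qed.

Lemma tri_mono s s' : s <= s' -> tri s <= tri s'.
Proof. move=> H; rewrite -leq_double !tri_double; nia. Qed.

Lemma tri_ge s : s <= tri s.
Proof. rewrite -leq_double tri_double; nia. Qed.

Lemma comp_tri n F : rcomp n F -> rcomp n (fun v => tri (F v)).
Proof.
move=> HF; have := comp_half (comp_mul HF (comp_succ HF)).
by cext => v _; rewrite tri_half.
Qed.

Lemma comp_cpair n F G : rcomp n F -> rcomp n G -> rcomp n (fun v => cpair (F v) (G v)).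
Proof.
move=> HF HG; have := comp_add (comp_tri (comp_add HF HG)) HG.
by cext => v _; rewrite cpairE.
Qed.

Fixpoint cnt (c k : nat) := if k is k'.+1 then cnt c k' + nat_of_bool (tri k'.+1 <= c) else 0.
Definition psum c := cnt c c.
Definition psnd c := c - tri (psum c).
Definition pfst c := psum c - psnd c.

Lemma cnt_min s b k : b <= s -> cnt (tri s + b) k = minn k s.
Proof.
move=> Hb; elim: k => [|k IH] /=; first by rewrite min0n.
have E : (tri k.+1 <= tri s + b) = (k.+1 <= s).
  case: (leqP k.+1 s) => Hk.
    by apply: leq_trans (tri_mono Hk) (leq_addr _ _).
  apply/negbTE; rewrite -ltnNge; apply: leq_trans (tri_mono Hk).
  by rewrite /= ltn_add2l ltnS.
rewrite IH E; case: (leqP k.+1 s) => /= Hk; lia.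
Qed.

Lemma psum_cpair a b : psum (cpair a b) = a + b.
Proof.
rewrite /psum cpairE cnt_min ?leq_addl //; apply/minn_idPr.
by apply: leq_trans (tri_ge _) (leq_addr _ _).
Qed.

Lemma psnd_cpair a b : psnd (cpair a b) = b.
Proof. by rewrite /psnd psum_cpair cpairE addKn. Qed.

Lemma pfst_cpair a b : pfst (cpair a b) = a.
Proof. by rewrite /pfst psum_cpair psnd_cpair addnK. Qed.

Lemma cpair_inj a b a' b' : cpair a b = cpair a' b' -> a = a' /\ b = b'.
Proof.
move=> E; split; first by rewrite -(pfst_cpair a b) E pfst_cpair.
by rewrite -(psnd_cpair a b) E psnd_cpair.
Qed.

Lemma comp_psum n F : rcomp n F -> rcomp n (fun v => psum (F v)).
Proof.
move=> HF.
have H1 : rcomp 1 (fun v => cnt (nth 0 v 0) (nth 0 v 0)).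
  have := comp_loop (n:=1) (I := fun v => 0)
   (S := fun v => nth 0 v 1 + nat_of_bool (tri (nth 0 v 0).+1 <= nth 0 v 2))
   (C := fun v => nth 0 v 0) (comp_const _ _)
   (comp_add (comp_proj _ _) (comp_leb (comp_tri (comp_succ (comp_proj _ _))) (comp_proj _ _)))
   (comp_proj _ _).
  cext => v _.
  suff E : forall k, prec (fun=> 0)
         (fun v0 : seq nat => nth 0 v0 1 + (tri (nth 0 v0 0).+1 <= nth 0 v0 2)) k v
          = cnt (nth 0 v 0) k by rewrite E.
  by elim => //= k ->.
exact: (comp1 H1 HF).
Qed.

Lemma comp_psnd n F : rcomp n F -> rcomp n (fun v => psnd (F v)).
Proof. move=> HF; exact: comp_sub HF (comp_tri (comp_psum HF)). Qed.

Lemma comp_pfst n F : rcomp n F -> rcomp n (fun v => pfst (F v)).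
Proof. move=> HF; exact: comp_sub (comp_psum HF) (comp_psnd HF). Qed.

Definition lcons x l := (cpair x l).+1.
Definition nhead l := pfst l.-1.
Definition ntail l := psnd l.-1.
Fixpoint ncode (s : seq nat) := if s is x :: s' then lcons x (ncode s') else 0.
Definition nnth l i := nhead (iter i ntail l).

Lemma nhead_cons x l : nhead (lcons x l) = x.
Proof. by rewrite /nhead /lcons /= pfst_cpair. Qed.
Lemma ntail_cons x l : ntail (lcons x l) = l.
Proof. by rewrite /ntail /lcons /= psnd_cpair. Qed.
Lemma ntail0 : ntail 0 = 0. Proof. by []. Qed.
Lemma nhead0 : nhead 0 = 0. Proof. by []. Qed.

Lemma iter_ntail0 i : iter i ntail 0 = 0.
Proof. by elim: i => //= i ->. Qed.

Lemma nnth_ncons x l i : nnth (lcons x l) i = if i is i'.+1 then nnth l i' else x.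
Proof.
case: i => [|i]; first by rewrite /nnth /= nhead_cons.
by rewrite /nnth iterSr ntail_cons.
Qed.

Lemma nnth_ncode s i : nnth (ncode s) i = nth 0 s i.
Proof.
elim: s i => [|x s IH] [|i] //=; rewrite ?nnth_ncons //;
  by rewrite /nnth iter_ntail0.
Qed.

Lemma comp_ncons n F G : rcomp n F -> rcomp n G -> rcomp n (fun v => lcons (F v) (G v)).
Proof. move=> HF HG; exact: comp_succ (comp_cpair HF HG). Qed.
Lemma comp_nhead n F : rcomp n F -> rcomp n (fun v => nhead (F v)).
Proof. move=> HF; exact: comp_pfst (comp_pred HF). Qed.
Lemma comp_ntail n F : rcomp n F -> rcomp n (fun v => ntail (F v)).
Proof. move=> HF; exact: comp_psnd (comp_pred HF). Qed.

Lemma comp_iter_ntail n L I : rcomp n L -> rcomp n I -> rcomp n (fun v => iter (I v) ntail (L v)).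
Proof.
move=> HL HI.
have := comp_loop (I := L) (S := fun w => ntail (nth 0 w 1)) HL (comp_ntail (comp_proj _ _)) HI.
by cext => v _; elim: (I v) => //= k ->.
Qed.

Lemma comp_nnth n L I : rcomp n L -> rcomp n I -> rcomp n (fun v => nnth (L v) (I v)).
Proof. move=> HL HI; exact: comp_nhead (comp_iter_ntail HL HI). Qed.

(* integers as pairs, rationals as pairs of integers *)
Definition intpair c := if odd c then cpair 0 (c./2).+1 else cpair c./2 0.
Definition iadd x y := cpair (pfst x + pfst y) (psnd x + psnd y).
Definition imul x y := cpair (pfst x * pfst y + psnd x * psnd y) (pfst x * psnd y + psnd x * pfst y).
Definition radd r s := cpair (iadd (imul (pfst r) (psnd s)) (imul (pfst s) (psnd r))) (imul (psnd r) (psnd s)).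
Definition rmul r s := cpair (imul (pfst r) (pfst s)) (imul (psnd r) (psnd s)).

Lemma comp_intpair n F : rcomp n F -> rcomp n (fun v => intpair (F v)).
Proof.
move=> HF; rewrite /intpair.
apply: comp_condb (comp_odd HF) _ _.
  exact: comp_cpair (comp_const _ _) (comp_succ (comp_half HF)).
exact: comp_cpair (comp_half HF) (comp_const _ _).
Qed.

Lemma comp_iadd n F G : rcomp n F -> rcomp n G -> rcomp n (fun v => iadd (F v) (G v)).
Proof.
move=> HF HG; exact: comp_cpair (comp_add (comp_pfst HF) (comp_pfst HG)) (comp_add (comp_psnd HF) (comp_psnd HG)).
Qed.

Lemma comp_imul n F G : rcomp n F -> rcomp n G -> rcomp n (fun v => imul (F v) (G v)).
Proof.
move=> HF HG; apply: comp_cpair.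
  exact: comp_add (comp_mul (comp_pfst HF) (comp_pfst HG)) (comp_mul (comp_psnd HF) (comp_psnd HG)).
exact: comp_add (comp_mul (comp_pfst HF) (comp_psnd HG)) (comp_mul (comp_psnd HF) (comp_pfst HG)).
Qed.

Lemma comp_radd n F G : rcomp n F -> rcomp n G -> rcomp n (fun v => radd (F v) (G v)).
Proof.
move=> HF HG; apply: comp_cpair.
  exact: comp_iadd (comp_imul (comp_pfst HF) (comp_psnd HG)) (comp_imul (comp_pfst HG) (comp_psnd HF)).
exact: comp_imul (comp_psnd HF) (comp_psnd HG).
Qed.

Lemma comp_rmul n F G : rcomp n F -> rcomp n G -> rcomp n (fun v => rmul (F v) (G v)).
Proof.
move=> HF HG; apply: comp_cpair.
  exact: comp_imul (comp_pfst HF) (comp_pfst HG).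
exact: comp_imul (comp_psnd HF) (comp_psnd HG).
Qed.

Fixpoint msearch (q : nat -> nat) (k : nat) : nat :=
  if k is k'.+1 then
    let st := msearch q k' in
    if st != 0 then st else (if q k' == 0 then 1 else if q k' == 1 then k'.+2 else 0)
  else 0.

Definition primloop (cf cg : seq nat -> nat) (v' : seq nat) : nat -> nat :=
  fix h k := if k is k'.+1 then (if h k' is r.+1 then cg (k' :: r :: v') else 0) else cf v'.

Fixpoint clock (f : recf) (t : nat) (v : seq nat) {struct f} : nat :=
  match f with
  | RZero => 1
  | RSucc => (head 0 v).+2
  | RProj i => (nth 0 v i).+1
  | RComp f gs => let ws := map (fun g => clock g t v) gs in
                  if all (fun w => 0 < w) ws then clock f t (map predn ws) else 0
  | RPrim f g => if v is n :: v' then primloop (clock f t) (clock g t) v' n else 0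
  | RMu f => (msearch (fun n => clock f t (n :: v)) t).-1
  end.

Section Ind.
Variable P : recf -> Prop.
Hypothesis HZ : P RZero.
Hypothesis HS : P RSucc.
Hypothesis HP : forall i, P (RProj i).
Hypothesis HC : forall f gs, P f -> (forall g, List.In g gs -> P g) -> P (RComp f gs).
Hypothesis HPr : forall f g, P f -> P g -> P (RPrim f g).
Hypothesis HM : forall f, P f -> P (RMu f).
Fixpoint recf_ind' f : P f :=
  match f with
  | RZero => HZ | RSucc => HS | RProj i => HP i
  | RComp f gs => HC (recf_ind' f)
      ((fix aux gs : forall g, List.In g gs -> P g :=
        match gs with
        | [::] => fun g H => False_ind _ H
        | g0 :: gs' => fun g H => match H with
                   | or_introl E => eq_ind g0 P (recf_ind' g0) g E
                   | or_intror H' => aux gs' g H' end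
        end) gs)
  | RPrim f g => HPr (recf_ind' f) (recf_ind' g)
  | RMu f => HM (recf_ind' f)
  end.
End Ind.

Lemma ms_zero q k : msearch q k = 0 -> forall m, m < k -> 2 <= q m.
Proof.
elim: k => [|k IH] //= H m Hm.
move: H; case: eqP => [E|NE] //= H.
  move: H; case: eqP => // H1; case: eqP => // H2 _.
  rewrite ltnS leq_eqVlt in Hm; case/orP: Hm => [/eqP->|]; last by apply: IH.
  by case: (q k) H1 H2 => [|[|]].
Qed.

Lemma ms_zero' q k : (forall m, m < k -> 2 <= q m) -> msearch q k = 0.
Proof.
elim: k => [|k IH] //= H.
rewrite IH; last by move=> m Hm; apply: H; lia.
have := H k (ltnSn k); by case: (q k) => [|[|]].
Qed.

Lemma ms_sound q k n : msearch q k = n.+2 -> q n = 1 /\ forall m, m < n -> 2 <= q m.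
Proof.
elim: k => [|k IH] //=.
case: eqP => [E|NE] /=; last by move=> H; apply: IH; rewrite -H; case: (msearch q k) NE.
case: eqP => // _; case: eqP => // H1 [<-]; split => //; exact: ms_zero E.
Qed.

Lemma ms_found q k n : (forall m, m < n -> 2 <= q m) -> q n = 1 -> n < k ->
  msearch q k = n.+2.
Proof.
move=> Hm Hn; elim: k => [|k IH] // Hk /=.
case: (ltngtP n k) => Hnk.
- by rewrite IH.
- lia.
- subst k; rewrite ms_zero' //= Hn //.
Qed.

Lemma clock_sound f : forall t v y, clock f t v = y.+1 -> eval f v y.
Proof.
elim/recf_ind': f.
- by move=> t v y [<-]; constructor.
- by move=> t v y [<-]; constructor.
- by move=> i t v y [<-]; constructor.
- move=> f gs IHf IHgs t v y /=; case: ifP => // Hall H.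
  apply: eComp (IHf _ _ _ H).
  elim: gs IHgs Hall {H} => [|g gs IH] IHgs /=; first by constructor.
  move=> /andP[Hg Ha]; constructor.
    by apply: (IHgs g (or_introl erefl) t); rewrite prednK.
  by apply: IH => // g' Hg'; apply: IHgs; right.
- move=> f g IHf IHg t [|n v'] y //=.
  elim: n y => [|n IHn] y /= H; first by constructor; apply: (IHf t).
  move: H; case E: (primloop _ _ v' n) => [|r] // H.
  by apply: ePrimS (IHn r E) (IHg _ _ _ H).
- move=> f IHf t v y /= H.
  have H2 : msearch (fun n => clock f t (n :: v)) t = y.+2.
    by move: H; case: (msearch _ t) => [|[|]] //= ? [->].
  have [Hy Hm] := ms_sound H2.
  constructor; first exact: (IHf t).
  move=> m /Hm; case E: (clock f t (m :: v)) => [|[|k]] // _.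
  by exists k; apply: (IHf t).
Qed.

Lemma bound_all n (P : nat -> nat -> Prop) :
  (forall m, m < n -> exists t0, forall t, t0 <= t -> P m t) ->
  exists t0, forall m, m < n -> forall t, t0 <= t -> P m t.
Proof.
elim: n => [|n IH] H; first by exists 0.
have [t1 H1] : exists t0, forall m, m < n -> forall t, t0 <= t -> P m t.
  by apply: IH => m Hm; apply: H; lia.
have [t2 H2] := H n (ltnSn n).
exists (maxn t1 t2) => m Hm t Ht.
rewrite ltnS leq_eqVlt in Hm; case/orP: Hm => [/eqP->|Hm].
  by apply: H2; lia.
by apply: H1 => //; lia.
Qed.

Lemma evals_clock gs v ws :
  (forall g, List.In g gs -> forall v y, eval g v y ->
     exists t0, forall t, t0 <= t -> clock g t v = y.+1) ->
  evals gs v ws -> exists t0, forall t, t0 <= t ->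
      map (fun g => clock g t v) gs = map succn ws.
Proof.
elim: gs ws => [|g gs IH] ws IHgs Hs; inversion Hs; subst; first by exists 0.
have [ta Ha] := IHgs g (or_introl erefl) _ _ H1.
have [tb Hb] := IH ws0 (fun g' Hg' => IHgs g' (or_intror Hg')) H4.
exists (maxn ta tb) => t Ht /=; rewrite Ha ?Hb //; lia.
Qed.

Lemma clock_complete f : forall v y, eval f v y ->
  exists t0, forall t, t0 <= t -> clock f t v = y.+1.
Proof.
elim/recf_ind': f.
- by move=> v y H; inversion H; subst; exists 0.
- by move=> v y H; inversion H; subst; exists 0.
- by move=> i v y H; inversion H; subst; exists 0.
- move=> f gs IHf IHgs v y H; inversion H; subst.
  have [t1 Ht1] := IHf _ _ H5.
  have [t2 Ht2] := evals_clock IHgs H2.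
  exists (maxn t1 t2) => t Ht /=; rewrite Ht2; last by lia.
  have -> : all (fun w => 0 < w) (map succn ws) by rewrite all_map; apply/allP.
  rewrite -map_comp map_id_in //; apply: Ht1; lia.
- move=> f g IHf IHg [|n v'] y H; first by inversion H.
  elim: n y H => [|n IHn] y H; inversion H; subst.
    have [t1 Ht1] := IHf _ _ H4; by exists t1 => t Ht /=; rewrite Ht1.
  have [t1 Ht1] := IHn _ H5.
  have [t2 Ht2] := IHg _ _ H6.
  exists (maxn t1 t2) => t Ht /=.
  have := Ht1 t; rewrite /= => ->; last by lia.
  by apply: Ht2; lia.
- move=> f IHf v n H; inversion H; subst.
  have [t1 Ht1] := IHf _ _ H1.
  have [t2 Ht2] : exists t0, forall m, m < n -> forall t, t0 <= t -> 2 <= clock f t (m :: v).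
    apply: bound_all => m Hm; have [k Hk] := H2 m Hm.
    have [t0 Ht0] := IHf _ _ Hk; by exists t0 => t Ht; rewrite Ht0.
  exists (maxn (maxn t1 t2) n.+1) => t Ht /=.
  rewrite (@ms_found _ _ n) //; last by lia.
    by move=> m Hm; apply: Ht2 => //; lia.
  by apply: Ht1; lia.
Qed.

Definition projsf j k : seq (seq nat -> nat) := map (fun i v => nth 0 v i) (iota j k).

Lemma allcomp_projsf n j k : allcomp n (projsf j k).
Proof. by rewrite /projsf; elim: k j => [|k IH] j //=; split; [exact: comp_proj|exact: IH]. Qed.

Lemma size_projsf j k : size (projsf j k) = k.
Proof. by rewrite /projsf size_map size_iota. Qed.

Lemma map_projsf j k v : size v = j + k -> map (fun G => G v) (projsf j k) = drop j v.
Proof.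
move=> Hv; rewrite /projsf -map_comp.
rewrite -[drop j v](mkseq_nth 0) size_drop Hv addKn /mkseq.
rewrite -[j]addn0 iotaDl -map_comp; apply: eq_map => i /=.
by rewrite nth_drop addn0.
Qed.

Lemma allcomp_map_pred n Gs : allcomp n Gs -> allcomp n (map (fun G v => (G v).-1) Gs).
Proof. elim: Gs => //= G Gs IH [H1 H2]; split; [exact: comp_pred|exact: IH]. Qed.

Lemma comp_allpos n Gs : allcomp n Gs ->
  rcomp n (fun v => nat_of_bool (all (fun w => 0 < w) (map (fun G => G v) Gs))).
Proof.
elim: Gs => [|G Gs IH] /=; first by move=> _; apply: comp_const.
move=> [HG HGs]; have := comp_mul (comp_leb (comp_const n 1) HG) (IH HGs).
by cext => v _; case: (0 < G v); rewrite /= ?mul1n ?mul0n.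
Qed.

Lemma comp_clock f : forall m, rcomp m.+1 (fun tv => clock f (head 0 tv) (behead tv)).
Proof.
elim/recf_ind': f.
- by move=> m; apply: comp_const.
- move=> m; have := comp_succ (comp_succ (comp_proj m.+1 1)).
  by cext => [[|t [|x v]]].
- move=> i m; have := comp_succ (comp_proj m.+1 i.+1).
  by cext => [[|t v]].
- move=> f gs IHf IHgs m.
  pose CG g := fun tv : seq nat => clock g (head 0 tv) (behead tv).
  have HGs : allcomp m.+1 (map CG gs).
    elim: gs IHgs {IHf} => //= g gs IH IHgs; split; first exact: IHgs g (or_introl erefl) m.
    by apply: IH => g' Hg'; apply: IHgs; right.
  have HA := @comp_compose _ _ _ ((fun tv => nth 0 tv 0) :: map (fun G v => (G v).-1) (map CG gs))
     (IHf (size gs)).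
  rewrite /= !size_map in HA; have {HA} := HA m.+1 erefl (conj (comp_proj _ _) (allcomp_map_pred HGs)).
  move=> HA; have := comp_condb (comp_allpos HGs) HA (comp_const _ 0).
  cext => tv _ /=.
  by rewrite -!map_comp /=.
- move=> f g IHf IHg [|m].
    by have := comp_const 1 0; cext => [[|t [|]]].
  have HI := @comp_compose _ m.+2 _ ((fun tv => nth 0 tv 0) :: projsf 2 m) (IHf m).
  rewrite /= size_projsf in HI; have {HI} := HI erefl (conj (comp_proj _ _) (allcomp_projsf _ _ _)).
  move=> HI.
  have HG := @comp_compose _ m.+4 _ ((fun w => nth 0 w 2) :: (fun w => nth 0 w 0) ::
        (fun w => (nth 0 w 1).-1) :: projsf 4 m) (IHg m.+2).
  rewrite /= size_projsf in HG.
  have {HG} := HG erefl (conj (comp_proj _ _) (conj (comp_proj _ _)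
              (conj (comp_pred (comp_proj _ _)) (allcomp_projsf _ _ _)))).
  move=> HG.
  have HS := comp_cond (comp_proj _ 1) HG (comp_const _ 0).
  have := comp_loop HI HS (comp_proj _ 1).
  cext => [[|t [|n v]]] // [Hv] /=.
  move: {1 3}n; elim=> [|k IH] /=.
    rewrite map_projsf; last by rewrite /=; lia. by rewrite /=; case: (v).
  rewrite IH; case: (primloop _ _ v k) => [|r] //=.
  rewrite map_projsf; last by rewrite /=; lia. rewrite /=. case: (v) => //.
- move=> f IHf m.
  have HQ := @comp_compose _ m.+3 _ ((fun w => nth 0 w 2) :: (fun w => nth 0 w 0) :: projsf 3 m) (IHf m.+1).
  rewrite /= size_projsf in HQ.
  have {HQ} := HQ erefl (conj (comp_proj _ _) (conj (comp_proj _ _) (allcomp_projsf _ _ _))).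
  move=> HQ.
  have HS := comp_cond (comp_proj _ 1) (comp_proj _ 1)
     (comp_cond HQ (comp_condb (comp_eqb HQ (comp_const _ 1)) (comp_succ (comp_succ (comp_proj _ 0)))
                      (comp_const _ 0)) (comp_const _ 1)).
  have := comp_pred (comp_loop (comp_const _ 0) HS (comp_proj _ 0)).
  cext => [[|t v]] // [Hv] /=; congr predn.
  move: {1 4}t; elim=> [|k IH] //=.
  rewrite IH map_projsf /=; last by lia.
  case: (msearch _ k) => [|st] //=; by rewrite drop0.
Qed.

Lemma div4E x r : r < 4 -> (4*x+r)./2./2 = x.
Proof. move=> H; rewrite -!divn2; lia. Qed.

Lemma cpair_ge1 a b : a <= cpair a b.
Proof. rewrite cpairE; have := tri_ge (a + b); lia. Qed.
Lemma cpair_ge2 a b : b <= cpair a b.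
Proof. rewrite cpairE; lia. Qed.

Section Fold.
Variables (LV LC : nat -> nat -> nat) (OA OM : nat -> nat -> nat -> nat).

Definition node (n h prm : nat) : nat :=
  let x := n./2./2 in let r := n - 4 * x in
  let va := nnth h (n.-1 - pfst x) in let vb := nnth h (n.-1 - psnd x) in
  if r == 0 then LV x prm else if r == 1 then LC x prm
  else if r == 2 then OA va vb prm else OM va vb prm.

Fixpoint hist (n prm : nat) : nat :=
  if n is n'.+1 then lcons (node n' (hist n' prm) prm) (hist n' prm) else 0.

Definition fold c prm := nhead (hist c.+1 prm).

Fixpoint Vp (p : zpoly) prm : nat :=
  match p with
  | PVar i => LV i prm
  | PConst z => LC (code_int z) prm
  | PAdd p q => OA (Vp p prm) (Vp q prm) prm
  | PMul p q => OM (Vp p prm) (Vp q prm) prm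
  end.

Lemma hist_nth prm n j : j < n -> nnth (hist n prm) (n.-1 - j) = fold j prm.
Proof.
elim: n => [|n IH] // Hj /=.
rewrite ltnS leq_eqVlt in Hj; case/orP: Hj => [/eqP->|Hj].
  by rewrite subnn nnth_ncons /fold /= nhead_cons.
have -> : n - j = (n.-1 - j).+1 by lia.
by rewrite nnth_ncons IH.
Qed.

Lemma fold_node c prm : fold c prm = node c (hist c prm) prm.
Proof. by rewrite /fold /= nhead_cons. Qed.

Lemma node_var i h prm : node (4 * i) h prm = LV i prm.
Proof. by rewrite /node -[4 * i]addn0 div4E // addn0 subnn. Qed.

Lemma node_const x h prm : node (4 * x).+1 h prm = LC x prm.
Proof.
rewrite /node -addn1 div4E //; have -> : 4 * x + 1 - 4 * x = 1 by lia.
by [].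
Qed.

Lemma node_add a b n h prm : n = (4 * cpair a b).+2 ->
  node n h prm = OA (nnth h (n.-1 - a)) (nnth h (n.-1 - b)) prm.
Proof.
move=> ->; rewrite /node -addn2 div4E // pfst_cpair psnd_cpair.
have -> : 4 * cpair a b + 2 - 4 * cpair a b = 2 by lia.
by rewrite addn2.
Qed.

Lemma node_mul a b n h prm : n = (4 * cpair a b).+3 ->
  node n h prm = OM (nnth h (n.-1 - a)) (nnth h (n.-1 - b)) prm.
Proof.
move=> ->; rewrite /node -addn3 div4E // pfst_cpair psnd_cpair.
have -> : 4 * cpair a b + 3 - 4 * cpair a b = 3 by lia.
by rewrite addn3.
Qed.

Lemma fold_code prm p : fold (code_zpoly p) prm = Vp p prm.
Proof.
elim: p => [i|z|p IHp q IHq|p IHp q IHq]; rewrite fold_node.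
- by rewrite node_var.
- by rewrite node_const.
- rewrite (node_add (a := code_zpoly p) (b := code_zpoly q)) //.
  have H1 := cpair_ge1 (code_zpoly p) (code_zpoly q).
  have H2 := cpair_ge2 (code_zpoly p) (code_zpoly q).
  by rewrite !hist_nth ?IHp ?IHq //=; lia.
- rewrite (node_mul (a := code_zpoly p) (b := code_zpoly q)) //.
  have H1 := cpair_ge1 (code_zpoly p) (code_zpoly q).
  have H2 := cpair_ge2 (code_zpoly p) (code_zpoly q).
  by rewrite !hist_nth ?IHp ?IHq //=; lia.
Qed.

Hypothesis cLV : forall n F G, rcomp n F -> rcomp n G -> rcomp n (fun v => LV (F v) (G v)).
Hypothesis cLC : forall n F G, rcomp n F -> rcomp n G -> rcomp n (fun v => LC (F v) (G v)).
Hypothesis cOA : forall n F G H, rcomp n F -> rcomp n G -> rcomp n H -> rcomp n (fun v => OA (F v) (G v) (H v)).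
Hypothesis cOM : forall n F G H, rcomp n F -> rcomp n G -> rcomp n H -> rcomp n (fun v => OM (F v) (G v) (H v)).

Lemma comp_node n N H P : rcomp n N -> rcomp n H -> rcomp n P ->
  rcomp n (fun v => node (N v) (H v) (P v)).
Proof.
move=> HN HH HP; rewrite /node.
have HX := comp_half (comp_half HN).
have HR := comp_sub HN (comp_mul (comp_const _ 4) HX).
have HA := comp_nnth HH (comp_sub (comp_pred HN) (comp_pfst HX)).
have HB := comp_nnth HH (comp_sub (comp_pred HN) (comp_psnd HX)).
apply: (comp_cond HR _ (cLV HX HP)).
apply: (comp_condb (comp_eqb HR (comp_const _ 1)) (cLC HX HP) _).
apply: comp_condb (comp_eqb HR (comp_const _ 2)) (cOA HA HB HP) (cOM HA HB HP).
Qed.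

Lemma comp_fold n C P : rcomp n C -> rcomp n P -> rcomp n (fun v => fold (C v) (P v)).
Proof.
move=> HC HP.
have H2 : rcomp 2 (fun v => hist (nth 0 v 0) (nth 0 v 1)).
  have := comp_loop (n := 2) (I := fun _ => 0)
    (S := fun w => lcons (node (nth 0 w 0) (nth 0 w 1) (nth 0 w 3)) (nth 0 w 1))
    (C := fun v => nth 0 v 0) (comp_const _ _)
    (comp_ncons (comp_node (comp_proj _ _) (comp_proj _ _) (comp_proj _ _)) (comp_proj _ _))
    (comp_proj _ _).
  by cext => v _; move: {1 2}(nth 0 v 0); elim=> //= k ->.
have := comp_nhead (comp2 H2 (comp_succ HC) HP).
by cext.
Qed.
End Fold.

Definition intv (x : nat) : int := (Posz (pfst x) - Posz (psnd x))%R.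
Definition ratv (r : nat) : rat := ((intv (pfst r))%:~R / (intv (psnd r))%:~R)%R.

Lemma intv_cpair a b : intv (cpair a b) = (Posz a - Posz b)%R.
Proof. by rewrite /intv pfst_cpair psnd_cpair. Qed.

Lemma intv_intpair z : intv (intpair (code_int z)) = z.
Proof.
case: z => n /=; rewrite /intpair.
  by rewrite odd_double doubleK intv_cpair subr0.
rewrite /= odd_double /= uphalf_double intv_cpair NegzE; lia.
Qed.

Lemma intv_iadd x y : intv (iadd x y) = (intv x + intv y)%R.
Proof. rewrite /iadd intv_cpair /intv; lia. Qed.

Lemma intv_imul x y : intv (imul x y) = (intv x * intv y)%R.
Proof. rewrite /imul intv_cpair /intv !PoszD !PoszM; ring. Qed.

Lemma ratv_radd r s : intv (psnd r) != 0%R -> intv (psnd s) != 0%R ->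
  intv (psnd (radd r s)) != 0%R /\ ratv (radd r s) = (ratv r + ratv s)%R.
Proof.
move=> Hr Hs; rewrite /radd /ratv !pfst_cpair !psnd_cpair intv_iadd !intv_imul.
move: (intv (pfst r)) (intv (psnd r)) (intv (pfst s)) (intv (psnd s)) Hr Hs => a b c d Hb Hd.
split; first by rewrite mulf_neq0.
rewrite !intrD !intrM; field.
by rewrite !intr_eq0 Hb Hd.
Qed.

Lemma ratv_rmul r s : intv (psnd r) != 0%R -> intv (psnd s) != 0%R ->
  intv (psnd (rmul r s)) != 0%R /\ ratv (rmul r s) = (ratv r * ratv s)%R.
Proof.
move=> Hr Hs; rewrite /rmul /ratv !pfst_cpair !psnd_cpair !intv_imul.
move: (intv (pfst r)) (intv (psnd r)) (intv (pfst s)) (intv (psnd s)) Hr Hs => a b c d Hb Hd.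
split; first by rewrite mulf_neq0.
rewrite !intrM; field.
by rewrite !intr_eq0 Hb Hd.
Qed.

Definition LVe (c1 c2 : nat -> nat) (i prm : nat) : nat :=
  if i <= pfst prm then cpair (intpair (c1 (nnth (psnd prm) i))) (intpair (c2 (nnth (psnd prm) i)))
  else cpair (cpair 0 0) (cpair 1 0).
Definition LCe (x prm : nat) : nat := cpair (intpair x) (cpair 1 0).
Definition OAe (a b prm : nat) : nat := radd a b.
Definition OMe (a b prm : nat) : nat := rmul a b.

Definition LVs (i prm : nat) : nat := 4 * i.+1.
Definition LCs (x prm : nat) : nat := (4 * x).+1.
Definition OAs (a b prm : nat) : nat := (4 * cpair a b).+2.
Definition OMs (a b prm : nat) : nat := (4 * cpair a b).+3.

Fixpoint shiftp (p : zpoly) : zpoly :=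
  match p with
  | PVar i => PVar i.+1
  | PConst z => PConst z
  | PAdd p q => PAdd (shiftp p) (shiftp q)
  | PMul p q => PMul (shiftp p) (shiftp q)
  end.

Lemma Vp_shift p prm : Vp LVs LCs OAs OMs p prm = code_zpoly (shiftp p).
Proof. by elim: p => //= p -> q ->. Qed.

Lemma zpeval_shift p y x : zpeval (shiftp p) (y :: x) = zpeval p x.
Proof. by elim: p => //= p -> q ->. Qed.

Definition taur (tau1 tau2 : nat -> int) (k : nat) : rat := ((tau1 k)%:~R / (tau2 k)%:~R)%R.
Definition tup (tau1 tau2 : nat -> int) nv L := [seq taur tau1 tau2 (nnth L i) | i <- iota 0 nv.+1].
Definition ct (tau : nat -> int) k := code_int (tau k).

Lemma Vp_eval tau1 tau2 (H2 : forall k, tau2 k != 0%R) nv L p :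
  let V := Vp (LVe (ct tau1) (ct tau2)) LCe OAe OMe p (cpair nv L) in
  intv (psnd V) != 0%R /\ ratv V = zpeval p (tup tau1 tau2 nv L).
Proof.
elim: p => [i|z|p IHp q IHq|p IHp q IHq].
- rewrite /= /LVe pfst_cpair psnd_cpair; case: leqP => Hi.
    rewrite /ratv !pfst_cpair !psnd_cpair /ct !intv_intpair; split; first exact: H2.
    rewrite /tup (nth_map 0) ?size_iota ?ltnS //.
    by rewrite nth_iota ?ltnS.
  rewrite /ratv !pfst_cpair !psnd_cpair !intv_cpair subr0; split; first by [].
  rewrite nth_default; last by rewrite /tup size_map size_iota.
  by rewrite mul0r.
- rewrite /= /LCe /ratv !pfst_cpair !psnd_cpair intv_intpair intv_cpair subr0.
  by split; [|rewrite divr1].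
- case: IHp => Hp Ep; case: IHq => Hq Eq.
  have [H E] := ratv_radd Hp Hq; split; first exact: H.
  by rewrite /= /OAe E Ep Eq.
- case: IHp => Hp Ep; case: IHq => Hq Eq.
  have [H E] := ratv_rmul Hp Hq; split; first exact: H.
  by rewrite /= /OMe E Ep Eq.
Qed.

Lemma ratv_eq0 V : intv (psnd V) != 0%R -> (ratv V == 0%R) = (pfst (pfst V) == psnd (pfst V)).
Proof.
move=> H; rewrite /ratv mulf_eq0 invr_eq0 !intr_eq0 (negbTE H) orbF /intv subr_eq0.
by apply/eqP/eqP => [[]|->].
Qed.

Lemma code_int_inj z z' : code_int z = code_int z' -> z = z'.
Proof. case: z => n; case: z' => m /=; rewrite -!mul2n => E; f_equal; lia. Qed.

Definition ptag p := match p with PVar _ => 0 | PConst _ => 1 | PAdd _ _ => 2 | PMul _ _ => 3 end.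
Definition ppay p := match p with PVar i => i | PConst z => code_int z
  | PAdd p q => cpair (code_zpoly p) (code_zpoly q) | PMul p q => cpair (code_zpoly p) (code_zpoly q) end.

Lemma code_split p : code_zpoly p = 4 * ppay p + ptag p.
Proof. by case: p => *; rewrite /= ?addn0 ?addn1 ?addn2 ?addn3. Qed.

Lemma eq4 x r y s : 4 * x + r = 4 * y + s -> r < 4 -> s < 4 -> x = y /\ r = s.
Proof. move=> *; lia. Qed.

Lemma code_pt p q : code_zpoly p = code_zpoly q -> ppay p = ppay q /\ ptag p = ptag q.
Proof. move=> E; apply: eq4; [by rewrite -!code_split|by case: (p)|by case: (q)]. Qed.

Lemma code_zpoly_inj p q : code_zpoly p = code_zpoly q -> p = q.
Proof.
elim: p q => [i|z|p1 IH1 p2 IH2|p1 IH1 p2 IH2] q /code_pt [];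
  case: q => [j|w|q1 q2|q1 q2] //= Ep _.
- by rewrite Ep.
- by rewrite (code_int_inj Ep).
- by case: (cpair_inj Ep) => /IH1 -> /IH2 ->.
- by case: (cpair_inj Ep) => /IH1 -> /IH2 ->.
Qed.

Lemma code_dioph_inj d d' : code_dioph d = code_dioph d' -> d = d'.
Proof.
case: d => n p; case: d' => n' p'; rewrite /code_dioph /= => /cpair_inj [-> /code_zpoly_inj ->].
by [].
Qed.

Definition dshift d := Dioph (dioph_nv d).+1 (shiftp (dioph_poly d)).

Lemma has_not_fin (R : rat -> Prop) d : infinite_set R -> has_solution_in R d ->
  ~ finitely_many_solutions_in R (dshift d).
Proof.
move=> Hinf [x [Hs [Hx Hz]]] [L HL]; apply: Hinf; exists (map (head 0%R) L) => q Rq.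
have HqL : (q :: x) \in L.
  apply: HL; split; first by rewrite /= Hs.
  split; first by move=> q'; rewrite in_cons => /orP [/eqP ->|/Hx].
  by rewrite /= zpeval_shift.
by apply/mapP; exists (q :: x).
Qed.

Lemma not_has_fin (R : rat -> Prop) d : ~ has_solution_in R d ->
  finitely_many_solutions_in R (dshift d).
Proof.
move=> H; exists [::] => -[|y x] [Hs [Hx Hz]] //; exfalso; apply: H; exists x.
split; first by case: Hs.
split; first by move=> q Hq; apply: Hx; rewrite in_cons Hq orbT.
by rewrite /= zpeval_shift in Hz.
Qed.

Lemma tup_ncode tau1 tau2 ks : tup tau1 tau2 (size ks).-1 (ncode ks) =
  if ks is [::] then [:: taur tau1 tau2 0] else map (taur tau1 tau2) ks.
Proof.
case: ks => [|k ks]; first by [].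
rewrite /tup -[in RHS](mkseq_nth 0 (k :: ks)) /mkseq -map_comp.
by apply: eq_map => i; rewrite nnth_ncode.
Qed.

Lemma has_sol_iff (R : rat -> Prop) tau1 tau2 d :
  (forall q, R q <-> exists k, q = taur tau1 tau2 k) ->
  has_solution_in R d <-> exists L, zpeval (dioph_poly d) (tup tau1 tau2 (dioph_nv d) L) = 0%R.
Proof.
move=> HR; split.
  move=> [x [Hs [Hx Hz]]].
  have [ks Eks] : exists ks, x = map (taur tau1 tau2) ks.
    elim: x {Hs Hz} Hx => [|q x IH] Hx; first by exists [::].
    have [k Hk] : exists k, q = taur tau1 tau2 k by apply/HR/Hx; rewrite in_cons eqxx.
    have [ks Eks] : exists ks, x = map (taur tau1 tau2) ks.
      by apply: IH => q' Hq'; apply: Hx; rewrite in_cons Hq' orbT.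
    by exists (k :: ks); rewrite Eks Hk.
  exists (ncode ks).
  have Hks : size ks = (dioph_nv d).+1 by rewrite -Hs Eks size_map.
  move: (tup_ncode tau1 tau2 ks); rewrite Hks /=.
  case: ks Eks Hks => [|k ks] // Eks _ ->; by rewrite -Eks.
move=> [L HL]; exists (tup tau1 tau2 (dioph_nv d) L); split.
  by rewrite /tup size_map size_iota.
split => // q /mapP [i _ ->]; apply/HR; by exists (nnth L i).
Qed.

Lemma comp_ct tau e0 : (forall k, eval e0 [:: k] (code_int (tau k))) ->
  forall n F, rcomp n F -> rcomp n (fun v => ct tau (F v)).
Proof.
move=> H n F HF; have H1 : rcomp 1 (fun v => ct tau (head 0 v)).
  by exists e0 => -[|k [|]] //= _; apply: H.
exact: (comp1 H1 HF).
Qed.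

Lemma main_dec (R : rat -> Prop) (tau1 tau2 : nat -> int) :
  infinite_set R ->
  computable_NZ tau1 -> computable_NZ tau2 ->
  (forall k, tau2 k != 0%R) ->
  (forall q, R q <-> exists k, q = ((tau1 k)%:~R / (tau2 k)%:~R)%R) ->
  re_dioph (finitely_many_solutions_in R) ->
  decidable_dioph (has_solution_in R).
Proof.
move=> Hinf [e1 He1] [e2 He2] H2 HR [e He].
have hc1 := comp_ct He1; have hc2 := comp_ct He2.
set c1 := ct tau1; set c2 := ct tau2.
have cLVe : forall n F G, rcomp n F -> rcomp n G -> rcomp n (fun v => LVe c1 c2 (F v) (G v)).
  move=> n F G HF HG; rewrite /LVe.
  apply: (comp_condb (comp_leb HF (comp_pfst HG)) _ (comp_const _ _)).
  exact: comp_cpair (comp_intpair (hc1 _ _ (comp_nnth (comp_psnd HG) HF)))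
                    (comp_intpair (hc2 _ _ (comp_nnth (comp_psnd HG) HF))).
have cLCe : forall n F G, rcomp n F -> rcomp n G -> rcomp n (fun v => LCe (F v) (G v)).
  by move=> n F G HF HG; exact: comp_cpair (comp_intpair HF) (comp_const _ _).
have cOAe : forall n F G H, rcomp n F -> rcomp n G -> rcomp n H -> rcomp n (fun v => OAe (F v) (G v) (H v)).
  by move=> n F G H HF HG HH; exact: comp_radd HF HG.
have cOMe : forall n F G H, rcomp n F -> rcomp n G -> rcomp n H -> rcomp n (fun v => OMe (F v) (G v) (H v)).
  by move=> n F G H HF HG HH; exact: comp_rmul HF HG.
have cLVs : forall n F G, rcomp n F -> rcomp n G -> rcomp n (fun v => LVs (F v) (G v)).
  by move=> n F G HF HG; exact: comp_mul (comp_const _ 4) (comp_succ HF).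
have cLCs : forall n F G, rcomp n F -> rcomp n G -> rcomp n (fun v => LCs (F v) (G v)).
  by move=> n F G HF HG; exact: comp_succ (comp_mul (comp_const _ 4) HF).
have cOAs : forall n F G H, rcomp n F -> rcomp n G -> rcomp n H -> rcomp n (fun v => OAs (F v) (G v) (H v)).
  by move=> n F G H HF HG HH; exact: comp_succ (comp_succ (comp_mul (comp_const _ 4) (comp_cpair HF HG))).
have cOMs : forall n F G H, rcomp n F -> rcomp n G -> rcomp n H -> rcomp n (fun v => OMs (F v) (G v) (H v)).
  by move=> n F G H HF HG HH;
   exact: comp_succ (comp_succ (comp_succ (comp_mul (comp_const _ 4) (comp_cpair HF HG)))).
pose Dc c := cpair (pfst c).+1 (fold LVs LCs OAs OMs (psnd c) 0).
pose Wf v := fold (LVe c1 c2) LCe OAe OMe (psnd (nth 0 v 1)) (cpair (pfst (nth 0 v 1)) (nth 0 v 0)).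
pose Bf v := nat_of_bool (pfst (pfst (Wf v)) == psnd (pfst (Wf v))).
pose Af v := clock e (nth 0 v 0) [:: Dc (nth 0 v 1)].
pose Tf v := if Af v == 0 then (if Bf v == 0 then 1 else 0) else 0.
have cW : rcomp 2 Wf.
  rewrite /Wf; exact: (comp_fold (n := 2) cLVe cLCe cOAe cOMe (comp_psnd (comp_proj _ 1))
    (comp_cpair (comp_pfst (comp_proj _ 1)) (comp_proj _ 0))).
have cB : rcomp 2 Bf by exact: comp_eqb (comp_pfst (comp_pfst cW)) (comp_psnd (comp_pfst cW)).
have cD : rcomp 2 (fun v => Dc (nth 0 v 1)).
  exact: comp_cpair (comp_succ (comp_pfst (comp_proj _ 1)))
    (comp_fold cLVs cLCs cOAs cOMs (comp_psnd (comp_proj _ 1)) (comp_const _ 0)).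
have cA : rcomp 2 Af by exact: comp2 (comp_clock e 1) (comp_proj _ 0) cD.
have cT : rcomp 2 Tf.
  exact: comp_cond cA (comp_const _ 0) (comp_cond cB (comp_const _ 0) (comp_const _ 1)).
case: cT => tf Htf; case: cB => bf Hbf.
exists (RComp bf [:: RMu tf; RProj 0]) => d.
set c := code_dioph d.
have Hc1 : pfst c = dioph_nv d by rewrite /c /code_dioph pfst_cpair.
have Hc2 : psnd c = code_zpoly (dioph_poly d) by rewrite /c /code_dioph psnd_cpair.
have HB s : Bf [:: s; c] = nat_of_bool (zpeval (dioph_poly d) (tup tau1 tau2 (dioph_nv d) s) == 0%R).
  have [Hn Hv] := @Vp_eval tau1 tau2 H2 (dioph_nv d) s (dioph_poly d).
  rewrite /Bf; have -> : Wf [:: s; c] = fold (LVe c1 c2) LCe OAe OMe (psnd c) (cpair (pfst c) s) by [].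
  by rewrite Hc1 Hc2 fold_code -Hv ratv_eq0.
have HD : Dc c = code_dioph (dshift d).
  by rewrite /Dc Hc1 Hc2 fold_code Vp_shift.
have K1 := has_sol_iff d HR.
have K2 s : Af [:: s; c] != 0 -> ~ has_solution_in R d.
  rewrite /Af /= HD; case E: (clock _ _ _) => [|y] // _.
  have Hy := clock_sound E.
  have [d0 [E0 F0]] : exists d0, code_dioph (dshift d) = code_dioph d0 /\
      finitely_many_solutions_in R d0 by apply/He; exists y.
  move/code_dioph_inj: E0 => E0; subst d0.
  by move=> Hs; exact: has_not_fin Hinf Hs F0.
have K3 : ~ has_solution_in R d -> exists s, Af [:: s; c] != 0.
  move=> Hn; have Hf := not_has_fin Hn.
  have [y Hy] : exists y, eval e [:: code_dioph (dshift d)] y.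
    by apply/He; exists (dshift d).
  have [t0 Ht0] := clock_complete Hy.
  by exists t0; rewrite /Af /= HD Ht0.
have Hex : exists s, Tf [:: s; c] == 0.
  case: (classic (has_solution_in R d)) => Hs.
    have [s Hs'] := proj1 K1 Hs; exists s.
    by rewrite /Tf HB Hs' eqxx /=; case: (Af _ == 0).
  have [s Hs'] := K3 Hs; exists s; by rewrite /Tf (negbTE Hs').
have [n Hn Hmin] := ex_minnP Hex.
have Hmu : eval (RMu tf) [:: c] n.
  constructor; first by move/eqP: Hn => <-; apply: Htf.
  move=> m Hm; case E: (Tf [:: m; c]) => [|k].
    by have := Hmin m (introT eqP E); lia.
  by exists k; rewrite -E; apply: Htf.
have Hev : eval (RComp bf [:: RMu tf; RProj 0]) [:: code_dioph d] (Bf [:: n; c]).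
  apply: (@eComp _ _ _ [:: n; c]); last by apply: Hbf.
  constructor; first exact: Hmu.
  by constructor; [exact: (eProj 0 [:: c])|constructor].
split.
  move=> Hs; suff E : Bf [:: n; c] = 1 by move: Hev; rewrite E.
  move/eqP: Hn; rewrite /Tf; case: eqP => HA.
    by rewrite HB; case: (zpeval _ _ == 0%R).
  by have := K2 n (introN eqP HA).
move=> Hs; suff E : Bf [:: n; c] = 0 by move: Hev; rewrite E.
rewrite HB; case E: (zpeval _ _ == 0%R) => //.
by exfalso; apply: Hs; apply/K1; exists n; apply/eqP.
Qed.

Local Open Scope ring_scope.

Theorem theorem2 (R : rat -> Prop) (tau1 tau2 : nat -> int) :
  infinite_set R ->
  computable_NZ tau1 -> computable_NZ tau2 ->
  (forall k, tau2 k != 0) ->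
  (forall q, R q <-> exists k, q = (tau1 k)%:~R / (tau2 k)%:~R) ->
  re_dioph (finitely_many_solutions_in R) ->
  decidable_dioph (has_solution_in R).
Proof. exact: main_dec. Qed.
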